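(* Let $m\geq 15$ and $k\geq 1$ be integers and let $c(x)=1+\sum_{j\in\{2,3,4,7\}}(x^j+x^{m-j})\in\mathbb{F}_2[x]$. Then $\gcd(c(x^k),x^m-1)=1$ if and only if $\gcd(m,3k)=\gcd(m,5k)=\gcd(m,k)$.
   Context: All polynomials are over $\mathbb{F}_2$. *)

(* Defs.v *)
From HB Require Import structures.
From mathcomp Require Import all_boot all_order all_algebra.
Set Implicit Arguments. Unset Strict Implicit. Unset Printing Implicit Defensive.
Import GRing.Theory.
Local Open Scope ring_scope.

Definition cpoly (m : nat) : {poly 'F_2} :=
  1 + \sum_(j <- [:: 2%N; 3%N; 4%N; 7%N]) ('X^j + 'X^(m - j)).

(* Main.v *)
Require Import Defs.
From HB Require Import structures.
From mathcomp Require Import all_boot all_order all_algebra.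
From mathcomp Require Import ring zify.
Import GRing.Theory.
Local Open Scope ring_scope.
Lemma two0 : (2 : {poly 'F_2}) = 0.
Proof. by rewrite -polyC_natr; congr polyC; apply/eqP. Qed.

Lemma ident (R : comRingType) (y w : R) (h2 : 2 = 0 :> R) :
  y^+7 * (1 + ((y^+2 + w*y^+5) + ((y^+3 + w*y^+4) + ((y^+4 + w*y^+3) + (y^+7 + w)))))
  = (y^+2+y+1)*(y^+4+y^+3+y^+2+y+1)^+3 + (w*y^+7 - 1)*(y^+5+y^+4+y^+3+1).
Proof.
have -> : y^+7 * (1 + ((y^+2 + w*y^+5) + ((y^+3 + w*y^+4) + ((y^+4 + w*y^+3) + (y^+7 + w))))) =
  (y^+2+y+1)*(y^+4+y^+3+y^+2+y+1)^+3 + (w*y^+7 - 1)*(y^+5+y^+4+y^+3+1)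
  - 2 * (2*y + 5*y^+2 + 9*y^+3 + 15*y^+4 + 21*y^+5 + 26*y^+6 + 27*y^+7 + 26*y^+8
         + 21*y^+9 + 15*y^+10 + 9*y^+11 + 5*y^+12 + 2*y^+13) by ring.
by rewrite h2 mul0r subr0.
Qed.

Lemma identA (R : comRingType) (y : R) (h2 : 2 = 0 :> R) :
  y^+2 + y + 1 = (y + 2) * (y - 1) + 1 /\ (y - 1) * (y^+2 + y + 1) = y^+3 - 1.
Proof.
split; last by ring.
have -> : y^+2 + y + 1 = (y + 2) * (y - 1) + 1 + 2 by ring.
by rewrite h2 addr0.
Qed.

Lemma identB (R : comRingType) (y : R) (h2 : 2 = 0 :> R) :
  y^+4 + y^+3 + y^+2 + y + 1 = (y^+3 + 2*y^+2 + 3*y + 4) * (y - 1) + 1 /\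
  (y - 1) * (y^+4 + y^+3 + y^+2 + y + 1) = y^+5 - 1.
Proof.
split; last by ring.
have -> : y^+4 + y^+3 + y^+2 + y + 1 = (y^+3 + 2*y^+2 + 3*y + 4) * (y - 1) + 1 + 2 * 2 by ring.
by rewrite h2 mulr0 addr0.
Qed.

Lemma gcdXn (F : fieldType) (n a b : nat) : (b <= n)%N ->
  gcdp ('X^a - 1 : {poly F}) ('X^b - 1) %= 'X^(gcdn a b) - 1.
Proof.
elim: n a b => [|n IH] a b hb.
  by move: hb; rewrite leqn0 => /eqP ->; rewrite expr0 subrr gcdp0 gcdn0 eqpxx.
case: b hb => [|b] hb; first by rewrite expr0 subrr gcdp0 gcdn0 eqpxx.
set c := (a %% b.+1)%N.
have ea : ('X^a - 1 : {poly F}) =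
   ('X^c * \sum_(i < (a %/ b.+1)) ('X^(b.+1))^+i) * ('X^(b.+1) - 1) + ('X^c - 1).
  rewrite -mulrA [_ * ('X^_ - 1)]mulrC -subrX1.
  rewrite -exprM mulrBr mulr1 -exprD addrA subrK /c addnC mulnC -divn_eq //.
apply: eqp_trans (gcdpC _ _) _.
rewrite ea; apply: eqp_trans (gcdp_addl_mul _ _ _) _.
have -> : gcdn a b.+1 = gcdn b.+1 c by rewrite /c gcdn_modr gcdnC.
apply: IH; have := ltn_pmod a (ltn0Sn b); rewrite -/c => h.
rewrite ltnS in hb; move: h; rewrite ltnS => h; exact: leq_trans h hb.
Qed.

Lemma core (P : {poly 'F_2}) (d m k : nat) : (0 < m)%N ->
  ('X^k - 1) * P = 'X^(d*k) - 1 -> coprimep P ('X^k - 1) ->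
  coprimep P ('X^m - 1) <-> gcdn m (d*k) = gcdn m k.
Proof.
move=> m0 eP cP.
have g1 := gcdXn 'F_2 (d*k) m (d*k) (leqnn (d*k)).
have g2 := gcdXn 'F_2 k m k (leqnn k).
split.
- move=> cPM.
  rewrite coprimep_sym in cPM.
  have e2 := Gauss_gcdpl ('X^k - 1) cPM.
  rewrite eP in e2.
  rewrite eqp_sym in g1.
  have := eqp_trans (eqp_trans g1 e2) g2.
  move/eqp_size; rewrite !size_Xn_sub_1 ?gcdn_gt0 ?m0 //; by case.
- move=> eg; apply/coprimepP => h hP hM.
  apply: (coprimepP _ _ cP) => //.
  have hg : h %| gcdp ('X^m - 1) (('X^k - 1) * P) by rewrite dvdp_gcd hM dvdp_mull.
  rewrite eP (eqp_dvdr _ g1) eg -(eqp_dvdr _ g2) in hg.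
  exact: dvdp_trans hg (dvdp_gcdr _ _).
Qed.

Theorem proposition6 (m k : nat) (hm : (15 <= m)%N) (hk : (1 <= k)%N) :
  coprimep (cpoly m \Po 'X^k) ('X^m - 1 : {poly 'F_2}) <->
  (gcdn m (3 * k) = gcdn m k /\ gcdn m (5 * k) = gcdn m k).
Proof.
have m0 : (0 < m)%N by lia.
set y : {poly 'F_2} := 'X^k.
set M : {poly 'F_2} := 'X^m - 1.
have [n em] : exists n, m = (n + 7)%N by exists (m - 7)%N; lia.
have ec : cpoly m \Po y = 1 + ((y^+2 + y^+n*y^+5) + ((y^+3 + y^+n*y^+4) + ((y^+4 + y^+n*y^+3) + (y^+7 + y^+n)))).
  rewrite /cpoly !big_cons big_nil addr0 !comp_polyD !comp_Xn_poly.
  rewrite -polyC1 comp_polyC polyC1 -!exprD.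
  have -> : (m - 2 = n + 5)%N by lia.
  have -> : (m - 3 = n + 4)%N by lia.
  have -> : (m - 4 = n + 3)%N by lia.
  have -> : (m - 7 = n)%N by lia.
  by [].
have cXM : coprimep 'X M.
  rewrite coprimep_sym coprimepX /root /M !hornerE expr0n.
  have -> : (m == 0%N) = false by lia.
  by [].
have cy7 : coprimep (y ^+ 7) M by rewrite /y -exprM; exact: coprimep_expl.
have -> : coprimep (cpoly m \Po y) M = coprimep (y^+7 * (cpoly m \Po y)) M.
  by rewrite coprimepMl cy7.
rewrite ec ident ?two0 // -exprD -em.
have -> : y ^+ m - 1 = M * \sum_(i < k) ('X^m) ^+ i.
  by rewrite /M -subrX1 /y -!exprM mulnC.
set A := y^+2 + y + 1.
set B := y^+4 + y^+3 + y^+2 + y + 1.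
set S := \sum_(i < k) _.
rewrite addrC -mulrA [M * _]mulrC coprimep_sym coprimep_addl_mul coprimep_sym.
rewrite !exprS expr0 mulr1 !coprimepMl.
have cA : coprimep A M <-> gcdn m (3 * k) = gcdn m k.
  apply: core => //.
    by rewrite (identA _ y two0).2 /y -exprM mulnC.
  by rewrite coprimep_sym /A (identA _ y two0).1 coprimep_addl_mul coprimep1.
have cB : coprimep B M <-> gcdn m (5 * k) = gcdn m k.
  apply: core => //.
    by rewrite (identB _ y two0).2 /y -exprM mulnC.
  by rewrite coprimep_sym /B (identB _ y two0).1 coprimep_addl_mul coprimep1.
split.
  by move=> /andP [a /andP [b _]]; split; [exact: cA.1 | exact: cB.1].
by case=> h3 h5; rewrite (cA.2 h3) (cB.2 h5).
Qed.
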